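(* Let $n\ge1$ be an integer, $b_a>0$, $b_v>0$, $c>0$, and consider the system on $[0,1]^2$ $$\dot p=p(1-p)\Big(\frac{b_a}{n+1}-q(b_v-c)\Big),\qquad \dot q=q(1-q)\Big(\frac{b_v}{n+1}\sum_{k=0}^n p^k-c\Big).$$ Suppose $b_a<(b_v-c)(n+1)$ and $b_v<c(n+1)$. Then there is an interior fixed point $(p^*,q^* )\in(0,1)^2$, where $q^*=\frac{b_a}{(b_v-c)(n+1)}$ and $p^*$ is the unique positive root of $\sum_{k=0}^n p^k=\frac{c(n+1)}{b_v}$, satisfying $1-\frac{b_v}{c(n+1)}\le p^*\le \frac{c(n+1)}{b_v}-1$. Moreover, with $$R(p)=\frac{b_v-c(n+1)}{n+1}\ln\frac{p}{1-p}-\frac{b_v}{n+1}\Big(n\ln(1-p)+\sum_{k=0}^{n-2}\frac{n-1-k}{k+1}p^{k+1}\Big),\qquad S(q)=\frac{b_a}{n+1}\ln\frac{q}{1-q}+(b_v-c)\ln(1-q),$$ the function $H(p,q)=R(p)-S(q)$ is constant along trajectories in $(0,1)^2$, has $(p^*,q^* )$ as its unique strict global minimum on $(0,1)^2$, and tends to $+\infty$ as $p$ or $q$ tends to $0$ or $1$; consequently $(p^*,q^* )$ is a center and every trajectory starting in $(0,1)^2$ other than the fixed point lies on a closed orbit in $(0,1)^2$ around $(p^*,q^* )$.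
   Context: This system is the replicator dynamics of the double goods game in factored form: $p$ is the proportion of glycolytic cells and $q$ the proportion of VEGF (over)producers among the aerobic cells; $b_a$ is the benefit per unit of acidification, $b_v$ the benefit per unit of vascularization, $c$ the cost of (over)producing VEGF, and $n$ the number of interaction partners. The parameter region in the hypothesis is the ''heterogeneous'' regime. *)

(* Defs.v *)
From Stdlib Require Import Reals Lra List.
From Coquelicot Require Import Coquelicot.
Open Scope R_scope.

(* rsum m f = sum_{k=0}^{m-1} f k  (empty sum = 0 when m = 0) *)
Definition rsum (m : nat) (f : nat -> R) : R :=
  fold_right Rplus 0 (map f (seq 0 m)).

Definition geo (n : nat) (p : R) : R := rsum (S n) (fun k => p ^ k).

Definition in01 (x : R) : Prop := 0 < x < 1.

Definition fp (ba bv c : R) (n : nat) (p q : R) : R :=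
  p * (1 - p) * (ba / INR (n + 1) - q * (bv - c)).
Definition fq (ba bv c : R) (n : nat) (p q : R) : R :=
  q * (1 - q) * (bv / INR (n + 1) * geo n p - c).

(* R(p): the inner sum is sum_{k=0}^{n-2} (n-1-k)/(k+1) p^(k+1) *)
Definition Rfun (ba bv c : R) (n : nat) (p : R) : R :=
  (bv - c * INR (n + 1)) / INR (n + 1) * ln (p / (1 - p))
  - bv / INR (n + 1) *
      (INR n * ln (1 - p)
       + rsum (n - 1) (fun k => INR (n - 1 - k) / INR (k + 1) * p ^ (k + 1))).

Definition Sfun (ba bv c : R) (n : nat) (q : R) : R :=
  ba / INR (n + 1) * ln (q / (1 - q)) + (bv - c) * ln (1 - q).

Definition Hfun (ba bv c : R) (n : nat) (p q : R) : R :=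
  Rfun ba bv c n p - Sfun ba bv c n q.

Definition is_solution (ba bv c : R) (n : nat) (p q : R -> R) : Prop :=
  forall t, in01 (p t) /\ in01 (q t) /\
    is_derive p t (fp ba bv c n (p t) (q t)) /\
    is_derive q t (fq ba bv c n (p t) (q t)).

(* Main.v *)
Require Import Defs.
From Stdlib Require Import Reals Lra Lia List Classical.
From Coquelicot Require Import Coquelicot.
Open Scope R_scope.

Lemma fold_acc (l : list R) (x : R) : fold_right Rplus x l = fold_right Rplus 0 l + x.
Proof. induction l as [|a l IH]; simpl; [lra| rewrite IH; lra]. Qed.

Lemma rsum_0 f : rsum 0 f = 0.
Proof. reflexivity. Qed.

Lemma rsum_S m f : rsum (S m) f = rsum m f + f m.
Proof.
  unfold rsum. rewrite seq_S, map_app, fold_right_app. simpl.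
  rewrite fold_acc. lra.
Qed.

Lemma rsum_ext m f g : (forall k, (k < m)%nat -> f k = g k) -> rsum m f = rsum m g.
Proof.
  induction m; intros H; [reflexivity|]. rewrite !rsum_S, IHm, H; [reflexivity|lia|].
  intros; apply H; lia.
Qed.

Lemma rsum_le m f g : (forall k, (k < m)%nat -> f k <= g k) -> rsum m f <= rsum m g.
Proof.
  induction m; intros H; [rewrite !rsum_0; lra|]. rewrite !rsum_S.
  assert (f m <= g m) by (apply H; lia).
  assert (rsum m f <= rsum m g) by (apply IHm; intros; apply H; lia). lra.
Qed.

Lemma rsum_plus m f g : rsum m (fun k => f k + g k) = rsum m f + rsum m g.
Proof. induction m; [rewrite !rsum_0; lra|]. rewrite !rsum_S, IHm. lra. Qed.

Lemma isd_plus (f g : R -> R) x a b : is_derive f x a -> is_derive g x b ->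
  is_derive (fun t => f t + g t) x (a + b).
Proof. intros; now apply (is_derive_plus f g). Qed.

Lemma isd_minus (f g : R -> R) x a b : is_derive f x a -> is_derive g x b ->
  is_derive (fun t => f t - g t) x (a - b).
Proof. intros; now apply (is_derive_minus f g). Qed.

Lemma isd_mult (f g : R -> R) x a b : is_derive f x a -> is_derive g x b ->
  is_derive (fun t => f t * g t) x (a * g x + f x * b).
Proof. intros. apply (is_derive_mult f g); auto. intros; apply Rmult_comm. Qed.

Lemma isd_comp (f g : R -> R) x a b : is_derive f (g x) a -> is_derive g x b ->
  is_derive (fun t => f (g t)) x (b * a).
Proof. intros. apply (is_derive_comp f g); auto. Qed.

Lemma rsum_derive m (F dF : nat -> R -> R) x :
  (forall k, is_derive (F k) x (dF k x)) ->
  is_derive (fun y => rsum m (fun k => F k y)) x (rsum m (fun k => dF k x)).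
Proof.
  intros H. induction m.
  - apply (is_derive_ext (fun _ => 0)). { intros; reflexivity. }
    rewrite rsum_0. apply (is_derive_const 0).
  - apply (is_derive_ext (fun y => rsum m (fun k => F k y) + F m y)).
    { intros; now rewrite rsum_S. }
    rewrite rsum_S. apply isd_plus; auto.
Qed.

Lemma mvt (f df : R -> R) a b : a < b -> (forall x, a <= x <= b -> is_derive f x (df x)) ->
  exists c, a < c < b /\ f b - f a = df c * (b - a).
Proof.
  intros Hab H. destruct (MVT_cor2 f df a b Hab) as [c [H1 H2]].
  { intros; apply is_derive_Reals; auto. }
  exists c; split; auto.
Qed.

Lemma isd_ext (f g : R -> R) x l : (forall t : R, f t = g t) -> is_derive f x l -> is_derive g x l.
Proof. intros H; apply is_derive_ext; exact H. Qed.

Lemma geo_S n x : geo (S n) x = geo n x + x ^ (S n).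
Proof. unfold geo. now rewrite rsum_S. Qed.

Lemma geo_O x : geo 0 x = 1.
Proof. unfold geo. rewrite rsum_S, rsum_0. simpl. lra. Qed.

Lemma geo_shift n x : geo (S n) x = 1 + x * geo n x.
Proof.
  induction n. - rewrite geo_S, geo_O. simpl. lra.
  - rewrite geo_S in IHn. rewrite !geo_S.
    replace (x ^ S (S n)) with (x * x ^ S n) by (simpl; ring). nra.
Qed.

Lemma geo_zero n : geo n 0 = 1.
Proof. induction n; [apply geo_O|]. rewrite geo_S, IHn. simpl. lra. Qed.

Lemma geo_one n : geo n 1 = INR (n + 1).
Proof.
  induction n; [rewrite geo_O; simpl; lra|]. rewrite geo_S, IHn, pow1.
  replace (S n + 1)%nat with (S (n+1)) by lia. rewrite S_INR. lra.
Qed.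

Lemma geo_gap n x y : (1 <= n)%nat -> 0 <= x <= y -> geo n y - geo n x >= y - x.
Proof.
  intros Hn Hxy. induction n; [lia|]. destruct n.
  - rewrite !geo_S, !geo_O. simpl. lra.
  - rewrite (geo_S (S n) x), (geo_S (S n) y).
    assert (x ^ S (S n) <= y ^ S (S n)) by (apply pow_incr; lra).
    assert (geo (S n) y - geo (S n) x >= y - x) by (apply IHn; lia). lra.
Qed.

Lemma geo_pos n x : 0 <= x -> 1 <= geo n x.
Proof.
  intros. induction n; [rewrite geo_O; lra|]. rewrite geo_S.
  assert (0 <= x ^ S n) by (apply pow_le; lra). lra.
Qed.

Definition dgeo n x := rsum (S n) (fun k => INR k * x ^ (pred k)).

Lemma geo_derive n x : is_derive (geo n) x (dgeo n x).
Proof.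
  unfold geo, dgeo.
  apply (rsum_derive (S n) (fun k y => y ^ k) (fun k y => INR k * y ^ pred k)).
  intros k. apply (is_derive_ext (fun y => y ^ k)); [reflexivity|].
  replace (INR k * x ^ pred k) with (INR k * 1 * x ^ pred k) by ring.
  apply (is_derive_pow (fun y => y)). apply (is_derive_id x).
Qed.

Lemma dgeo_bound n x : 0 <= x <= 1 -> 0 <= dgeo n x <= dgeo n 1.
Proof.
  intros Hx. unfold dgeo. split.
  - replace 0 with (rsum (S n) (fun _ => 0)).
    2:{ clear. induction (S n); [reflexivity| rewrite rsum_S, IHn0; lra]. }
    apply rsum_le. intros. apply Rmult_le_pos; [apply pos_INR| apply pow_le; lra].
  - apply rsum_le. intros. apply Rmult_le_compat_l; [apply pos_INR|].
    apply pow_incr; lra.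
Qed.

Definition Bf (bv c : R) (n : nat) x := bv / INR (n+1) * geo n x - c.
Definition Af (ba bv c : R) (n : nat) y := ba / INR (n+1) - y * (bv - c).
Definition Pf (n : nat) x := rsum (n - 1) (fun k => INR (n - 1 - k) / INR (k + 1) * x ^ (k + 1)).

Lemma ident m x : (1 - x) * rsum m (fun k => INR (m - k) * x ^ k) = INR m + 1 - geo m x.
Proof.
  induction m.
  - rewrite rsum_0, geo_O. simpl. lra.
  - rewrite rsum_S. replace (S m - m)%nat with 1%nat by lia.
    rewrite (rsum_ext m _ (fun k => INR (m - k) * x ^ k + x ^ k)).
    2:{ intros. replace (S m - k)%nat with (S (m - k)) by lia. rewrite S_INR. ring. }
    rewrite rsum_plus.
    assert (Hg : rsum m (fun k => x ^ k) + x ^ m = geo m x).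
    { destruct m. rewrite rsum_0, geo_O. simpl; lra. unfold geo. rewrite (rsum_S (S m)). reflexivity. }
    change (rsum m (pow x)) with (rsum m (fun k => x ^ k)).
    rewrite geo_shift, (S_INR m).
    replace (INR 1) with 1 by reflexivity.
    transitivity ((1 - x) * rsum m (fun k => INR (m - k) * x ^ k) + (1 - x) * (rsum m (fun k => x ^ k) + x ^ m)).
    ring. rewrite IHm, Hg. ring.
Qed.

Lemma Pf_derive n x : is_derive (Pf n) x (rsum (n - 1) (fun k => INR (n - 1 - k) * x ^ k)).
Proof.
  unfold Pf.
  rewrite (rsum_ext _ _ (fun k => INR (n - 1 - k) / INR (k + 1) * (INR (k+1) * 1 * x ^ pred (k + 1)))).
  2:{ intros. replace (pred (k+1)) with k by lia. field. apply not_0_INR. lia. }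
  apply (rsum_derive (n-1) (fun k y => INR (n - 1 - k) / INR (k + 1) * y ^ (k + 1))
     (fun k y => INR (n - 1 - k) / INR (k + 1) * (INR (k+1) * 1 * y ^ pred (k + 1)))).
  intros k. apply is_derive_scal. apply (is_derive_pow (fun y => y)). apply (is_derive_id x).
Qed.

Lemma INR_n1_pos n : 0 < INR (n + 1).
Proof. apply lt_0_INR; lia. Qed.

Lemma Rfun_derive ba bv c n x : (1 <= n)%nat -> 0 < x < 1 ->
  is_derive (Rfun ba bv c n) x (Bf bv c n x / (x * (1 - x))).
Proof.
  intros Hn Hx. pose proof (INR_n1_pos n) as Hp.
  set (al := (bv - c * INR (n + 1)) / INR (n + 1)).
  set (ga := bv / INR (n + 1)).
  apply (isd_ext (fun y => (al * ln (y / (1 - y)) - ga * (INR n * ln (1 - y))) - ga * Pf n y)).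
  { intros t. unfold Rfun, Pf. fold al ga. ring. }
  assert (H1 : is_derive (fun y => al * ln (y / (1 - y)) - ga * (INR n * ln (1 - y))) x
     (al * / (x * (1 - x)) - ga * (INR n * (- / (1 - x))))).
  { auto_derive. 
    - repeat split; try lra. apply Rmult_lt_0_compat; [lra|]. apply Rinv_0_lt_compat; lra.
    - field. lra. }
  eapply isd_ext; [intros; reflexivity|].
  replace (Bf bv c n x / (x * (1 - x))) with
    ((al * / (x * (1 - x)) - ga * (INR n * (- / (1 - x)))) - ga * rsum (n - 1) (fun k => INR (n - 1 - k) * x ^ k)).
  { apply isd_minus. exact H1. apply is_derive_scal. apply Pf_derive. }
  destruct n as [|m]; [lia|]. assert (E : (S m - 1)%nat = m) by lia. rewrite E.
  pose proof (ident m x) as Hi.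
  unfold Bf. rewrite geo_shift. fold ga. unfold al.
  replace (INR (S m)) with (INR m + 1) by (rewrite S_INR; ring).
  replace (INR (S m + 1)) with (INR m + 2) in * by (rewrite plus_INR, S_INR; simpl; ring).
  assert (HD : rsum m (fun k => INR (m - k) * x ^ k) = (INR m + 1 - geo m x) / (1 - x)).
  { apply (Rmult_eq_reg_l (1 - x)); [rewrite Hi; field; lra | lra]. }
  rewrite HD. unfold ga.
  replace (INR (S m + 1)) with (INR m + 2) by (rewrite plus_INR, S_INR; simpl; ring).
  field. lra.
Qed.

Lemma Sfun_derive ba bv c n y : 0 < y < 1 ->
  is_derive (Sfun ba bv c n) y (Af ba bv c n y / (y * (1 - y))).
Proof.
  intros Hy. pose proof (INR_n1_pos n). unfold Sfun, Af. auto_derive.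
  - repeat split; try lra. apply Rmult_lt_0_compat; [lra|]. apply Rinv_0_lt_compat; lra.
  - field. lra.
Qed.

Definition Hyp (n : nat) (ba bv c : R) := (1 <= n)%nat /\ 0 < ba /\ 0 < bv /\ 0 < c /\
  ba < (bv - c) * INR (n + 1) /\ bv < c * INR (n + 1).

Definition qsv ba bv c n := ba / ((bv - c) * INR (n + 1)).

Lemma cont_der (f : R -> R) x l : is_derive f x l -> continuity_pt f x.
Proof. intros H. apply continuity_pt_filterlim. apply (ex_derive_continuous (V := R_NormedModule)). now exists l. Qed.

Lemma geo_mul n x : (1 - x) * geo n x = 1 - x ^ (S n).
Proof. induction n. rewrite geo_O. simpl; ring. rewrite geo_S. 
  replace (x ^ S (S n)) with (x * x ^ S n) by (simpl; ring).
  rewrite Rmult_plus_distr_l, IHn. ring. Qed.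

Lemma Hyp_bvc n ba bv c : Hyp n ba bv c -> c < bv.
Proof.
  intros (Hn & Ha & Hb & Hc & H1 & H2). pose proof (INR_n1_pos n).
  destruct (Rlt_or_le c bv); auto. nra.
Qed.

Lemma ps_exists n ba bv c : Hyp n ba bv c ->
  exists ps, 0 < ps < 1 /\ geo n ps = c * INR (n + 1) / bv.
Proof.
  intros H. pose proof (Hyp_bvc _ _ _ _ H) as Hcb.
  destruct H as (Hn & Ha & Hb & Hc & H1 & H2). pose proof (INR_n1_pos n) as Hp.
  assert (HK1 : 1 < c * INR (n + 1) / bv).
  { apply (Rmult_lt_reg_r bv); auto. field_simplify; lra. }
  assert (HK2 : c * INR (n + 1) / bv < INR (n + 1)).
  { apply (Rmult_lt_reg_r bv); auto. field_simplify; nra. }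
  destruct (IVT_gen (geo n) 0 1 (c * INR (n + 1) / bv)) as [x [Hx1 Hx2]].
  - intros x. eapply cont_der. apply geo_derive.
  - rewrite geo_zero, geo_one. rewrite Rmin_left, Rmax_right; lra.
  - rewrite Rmin_left, Rmax_right in Hx1 by lra. exists x. split; auto.
    destruct (Req_dec x 0) as [->|]. rewrite geo_zero in Hx2; lra.
    destruct (Req_dec x 1) as [->|]. rewrite geo_one in Hx2; lra. lra.
Qed.

Lemma qs_in n ba bv c : Hyp n ba bv c -> 0 < qsv ba bv c n < 1.
Proof.
  intros H. pose proof (Hyp_bvc _ _ _ _ H). destruct H as (Hn & Ha & Hb & Hc & H1 & H2).
  pose proof (INR_n1_pos n). unfold qsv.
  assert (0 < (bv - c) * INR (n + 1)) by nra. split.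
  apply Rdiv_lt_0_compat; lra.
  apply (Rmult_lt_reg_r ((bv - c) * INR (n + 1))); auto. field_simplify; lra.
Qed.

Lemma Af_eq n ba bv c y : Hyp n ba bv c -> Af ba bv c n y = (bv - c) * (qsv ba bv c n - y).
Proof.
  intros H. pose proof (Hyp_bvc _ _ _ _ H). pose proof (INR_n1_pos n). unfold Af, qsv.
  field. lra.
Qed.

Lemma Bf_ps n ba bv c ps : Hyp n ba bv c -> geo n ps = c * INR (n + 1) / bv -> Bf bv c n ps = 0.
Proof.
  intros H Hg. destruct H as (Hn & Ha & Hb & Hc & H1 & H2). pose proof (INR_n1_pos n).
  unfold Bf. rewrite Hg. field. lra.
Qed.

Lemma Bf_ge n ba bv c ps x : Hyp n ba bv c -> 0 <= ps -> geo n ps = c * INR (n + 1) / bv ->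
  ps <= x -> Bf bv c n x >= bv / INR (n + 1) * (x - ps).
Proof.
  intros H Hp0 Hg Hx. pose proof (Bf_ps _ _ _ _ _ H Hg) as H0.
  pose proof H as (Hn & Ha & Hb & Hc & H1 & H2). pose proof (INR_n1_pos n).
  pose proof (geo_gap n ps x Hn (conj Hp0 Hx)).
  assert (0 < bv / INR (n + 1)) by (apply Rdiv_lt_0_compat; lra).
  unfold Bf in *. nra.
Qed.

Lemma Bf_le n ba bv c ps x : Hyp n ba bv c -> geo n ps = c * INR (n + 1) / bv ->
  0 <= x <= ps -> Bf bv c n x <= - (bv / INR (n + 1) * (ps - x)).
Proof.
  intros H Hg Hx. pose proof (Bf_ps _ _ _ _ _ H Hg) as H0.
  pose proof H as (Hn & Ha & Hb & Hc & H1 & H2). pose proof (INR_n1_pos n).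
  pose proof (geo_gap n x ps Hn Hx).
  assert (0 < bv / INR (n + 1)) by (apply Rdiv_lt_0_compat; lra).
  unfold Bf in *. nra.
Qed.

Lemma R_inc n ba bv c ps x y : Hyp n ba bv c -> 0 < ps -> geo n ps = c * INR (n + 1) / bv ->
  ps <= x -> x < y -> y < 1 -> Rfun ba bv c n x < Rfun ba bv c n y.
Proof.
  intros H Hp Hg Hx Hxy Hy. pose proof H as (Hn & _).
  destruct (mvt (Rfun ba bv c n) (fun z => Bf bv c n z / (z * (1 - z))) x y Hxy) as [z [Hz Heq]].
  { intros; apply Rfun_derive; auto; lra. }
  pose proof (Bf_ge n ba bv c ps z H (Rlt_le _ _ Hp) Hg ltac:(lra)).
  pose proof H as (_ & Ha & Hb & _). pose proof (INR_n1_pos n).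
  assert (0 < bv / INR (n + 1)) by (apply Rdiv_lt_0_compat; lra).
  assert (0 < Bf bv c n z / (z * (1 - z))).
  { apply Rdiv_lt_0_compat; [nra|]. apply Rmult_lt_0_compat; lra. }
  nra.
Qed.

Lemma R_dec n ba bv c ps x y : Hyp n ba bv c -> ps < 1 -> geo n ps = c * INR (n + 1) / bv ->
  0 < x -> x < y -> y <= ps -> Rfun ba bv c n y < Rfun ba bv c n x.
Proof.
  intros H Hp1 Hg Hx Hxy Hy. pose proof H as (Hn & _).
  destruct (mvt (Rfun ba bv c n) (fun z => Bf bv c n z / (z * (1 - z))) x y Hxy) as [z [Hz Heq]].
  { intros; apply Rfun_derive; auto; lra. }
  pose proof (Bf_le n ba bv c ps z H Hg ltac:(lra)).
  pose proof H as (_ & Ha & Hb & _). pose proof (INR_n1_pos n).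
  assert (0 < bv / INR (n + 1)) by (apply Rdiv_lt_0_compat; lra).
  assert (0 < / (z * (1 - z))) by (apply Rinv_0_lt_compat; apply Rmult_lt_0_compat; lra).
  assert (0 < bv / INR (n + 1) * (ps - z)) by (apply Rmult_lt_0_compat; lra).
  assert (Bf bv c n z / (z * (1 - z)) < 0) by (unfold Rdiv; nra).
  nra.
Qed.

Lemma S_dec n ba bv c x y : Hyp n ba bv c -> qsv ba bv c n <= x -> x < y -> y < 1 ->
  Sfun ba bv c n y < Sfun ba bv c n x.
Proof.
  intros H Hx Hxy Hy. pose proof (qs_in _ _ _ _ H). pose proof (Hyp_bvc _ _ _ _ H).
  destruct (mvt (Sfun ba bv c n) (fun z => Af ba bv c n z / (z * (1 - z))) x y Hxy) as [z [Hz Heq]].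
  { intros; apply Sfun_derive; lra. }
  rewrite Af_eq in Heq by auto.
  assert (0 < / (z * (1 - z))) by (apply Rinv_0_lt_compat; apply Rmult_lt_0_compat; lra).
  assert ((bv - c) * (qsv ba bv c n - z) < 0) by nra.
  assert ((bv - c) * (qsv ba bv c n - z) / (z * (1 - z)) < 0) by (unfold Rdiv; nra).
  nra.
Qed.

Lemma S_inc n ba bv c x y : Hyp n ba bv c -> 0 < x -> x < y -> y <= qsv ba bv c n ->
  Sfun ba bv c n x < Sfun ba bv c n y.
Proof.
  intros H Hx Hxy Hy. pose proof (qs_in _ _ _ _ H). pose proof (Hyp_bvc _ _ _ _ H).
  destruct (mvt (Sfun ba bv c n) (fun z => Af ba bv c n z / (z * (1 - z))) x y Hxy) as [z [Hz Heq]].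
  { intros; apply Sfun_derive; lra. }
  rewrite Af_eq in Heq by auto.
  assert (0 < / (z * (1 - z))) by (apply Rinv_0_lt_compat; apply Rmult_lt_0_compat; lra).
  assert (0 < (bv - c) * (qsv ba bv c n - z)) by nra.
  assert (0 < (bv - c) * (qsv ba bv c n - z) / (z * (1 - z))) by (unfold Rdiv; nra).
  nra.
Qed.

Lemma ln_div' x y : 0 < x -> 0 < y -> ln (x / y) = ln x - ln y.
Proof. intros. unfold Rdiv. rewrite ln_mult, ln_Rinv; try lra. apply Rinv_0_lt_compat; lra. Qed.

Lemma ln_neg x : 0 < x < 1 -> ln x < 0.
Proof. intros. rewrite <- ln_1. apply ln_increasing; lra. Qed.

Lemma Pf_bounds n x : 0 <= x <= 1 -> 0 <= Pf n x <= Pf n 1.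
Proof.
  intros Hx. unfold Pf. split.
  - replace 0 with (rsum (n - 1) (fun _ => 0)).
    2:{ clear. induction (n - 1)%nat; [reflexivity| rewrite rsum_S, IHn0; lra]. }
    apply rsum_le. intros. apply Rmult_le_pos; [|apply pow_le; lra].
    apply Rdiv_le_0_compat; [apply pos_INR| apply lt_0_INR; lia].
  - apply rsum_le. intros. apply Rmult_le_compat_l.
    apply Rdiv_le_0_compat; [apply pos_INR| apply lt_0_INR; lia].
    apply pow_incr; lra.
Qed.

Lemma Rfun_decomp ba bv c n x : 0 < x < 1 ->
  Rfun ba bv c n x = (bv - c * INR (n + 1)) / INR (n + 1) * ln x + (c - bv) * ln (1 - x)
     - bv / INR (n + 1) * Pf n x.
Proof.
  intros Hx. pose proof (INR_n1_pos n). unfold Rfun, Pf. rewrite ln_div' by lra.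
  replace (INR (n + 1)) with (INR n + 1) in * by (rewrite plus_INR; reflexivity).
  field. lra.
Qed.

Lemma Sfun_decomp ba bv c n y : 0 < y < 1 ->
  - Sfun ba bv c n y = - (ba / INR (n + 1)) * ln y + (ba / INR (n + 1) - (bv - c)) * ln (1 - y).
Proof. intros Hy. unfold Sfun. rewrite ln_div' by lra. ring. Qed.

Lemma kln k L z : k < 0 -> 0 < z -> z < exp (L / k) -> L < k * ln z.
Proof.
  intros Hk Hz Hzl. pose proof (ln_increasing _ _ Hz Hzl) as H. rewrite ln_exp in H.
  apply (Rmult_lt_compat_l (-k)) in H; [|lra].
  replace (- k * (L / k)) with (- L) in H by (field; lra). lra.
Qed.

Lemma blowup n ba bv c : Hyp n ba bv c -> forall M, exists d, 0 < d /\
  forall x y, in01 x -> in01 y -> (x < d \/ 1 - d < x \/ y < d \/ 1 - d < y) ->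
  M < Hfun ba bv c n x y.
Proof.
  intros H M. pose proof (Hyp_bvc _ _ _ _ H) as Hcb.
  pose proof H as (Hn & Ha & Hb & Hc & H1 & H2). pose proof (INR_n1_pos n) as Hp.
  set (al := (bv - c * INR (n + 1)) / INR (n + 1)).
  set (ga := bv / INR (n + 1)).
  set (a := ba / INR (n + 1)).
  assert (Hal : al < 0). { unfold al. apply (Rmult_lt_reg_r (INR (n+1))); auto. field_simplify; lra. }
  assert (Hga : 0 < ga) by (apply Rdiv_lt_0_compat; lra).
  assert (Ha0 : 0 < a) by (apply Rdiv_lt_0_compat; lra).
  assert (Ha1 : a - (bv - c) < 0). { unfold a. apply (Rmult_lt_reg_r (INR (n+1))); auto. field_simplify; lra. }
  set (K := ga * Pf n 1).
  pose proof (Pf_bounds n 1 ltac:(lra)) as HP1.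
  assert (HK : 0 <= K) by (apply Rmult_le_pos; lra).
  set (L := Rabs M + K + 1).
  exists (Rmin (Rmin (exp (L / al)) (exp (L / (c - bv)))) (Rmin (exp (L / (- a))) (exp (L / (a - (bv - c)))))).
  split. { repeat apply Rmin_pos; apply exp_pos. }
  intros x y Hx Hy Hd. unfold in01 in *.
  unfold Hfun. rewrite Rfun_decomp by auto.
  assert (HS : - Sfun ba bv c n y = - a * ln y + (a - (bv - c)) * ln (1 - y)) by (apply Sfun_decomp; auto).
  pose proof (ln_neg x Hx). pose proof (ln_neg (1 - x) ltac:(lra)).
  pose proof (ln_neg y Hy). pose proof (ln_neg (1 - y) ltac:(lra)).
  pose proof (Pf_bounds n x ltac:(lra)) as HPx.
  assert (ga * Pf n x <= K) by (unfold K; apply Rmult_le_compat_l; lra).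
  assert (0 <= al * ln x) by nra. assert (0 <= (c - bv) * ln (1 - x)) by nra.
  assert (0 <= - a * ln y) by nra. assert (0 <= (a - (bv - c)) * ln (1 - y)) by nra.
  pose proof (Rle_abs M).
  fold al ga.
  assert (L < al * ln x \/ L < (c - bv) * ln (1 - x) \/ L < - a * ln y \/ L < (a - (bv - c)) * ln (1 - y)).
  { pose proof (Rmin_l (Rmin (exp (L / al)) (exp (L / (c - bv)))) (Rmin (exp (L / (- a))) (exp (L / (a - (bv - c)))))).
    pose proof (Rmin_r (Rmin (exp (L / al)) (exp (L / (c - bv)))) (Rmin (exp (L / (- a))) (exp (L / (a - (bv - c)))))).
    pose proof (Rmin_l (exp (L / al)) (exp (L / (c - bv)))).
    pose proof (Rmin_r (exp (L / al)) (exp (L / (c - bv)))).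
    pose proof (Rmin_l (exp (L / (- a))) (exp (L / (a - (bv - c))))).
    pose proof (Rmin_r (exp (L / (- a))) (exp (L / (a - (bv - c))))).
    destruct Hd as [Hd|[Hd|[Hd|Hd]]].
    - left. apply kln; lra.
    - right; left. apply kln; lra.
    - right; right; left. apply kln; lra.
    - right; right; right. apply kln; lra. }
  unfold L in *. lra.
Qed.

Lemma R_lower n ba bv c x : Hyp n ba bv c -> 0 < x < 1 ->
  - (bv / INR (n + 1) * Pf n 1) <= Rfun ba bv c n x.
Proof.
  intros H Hx. pose proof (Hyp_bvc _ _ _ _ H) as Hcb.
  pose proof H as (Hn & Ha & Hb & Hc & H1 & H2). pose proof (INR_n1_pos n) as Hp.
  rewrite Rfun_decomp by auto.
  assert (Hal : (bv - c * INR (n + 1)) / INR (n + 1) < 0).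
  { apply (Rmult_lt_reg_r (INR (n+1))); auto. field_simplify; lra. }
  assert (Hga : 0 < bv / INR (n + 1)) by (apply Rdiv_lt_0_compat; lra).
  pose proof (ln_neg x Hx). pose proof (ln_neg (1 - x) ltac:(lra)).
  pose proof (Pf_bounds n x ltac:(lra)) as HPx.
  assert (bv / INR (n + 1) * Pf n x <= bv / INR (n + 1) * Pf n 1) by (apply Rmult_le_compat_l; lra).
  nra.
Qed.

Lemma const_of_deriv0 (f : R -> R) : (forall t, is_derive f t 0) -> forall t s, f t = f s.
Proof.
  intros H t s. destruct (Rtotal_order t s) as [h|[h|h]]; [| subst; reflexivity |].
  - destruct (mvt f (fun _ => 0) t s h) as [c [_ E]]; [intros; auto|]. lra.
  - destruct (mvt f (fun _ => 0) s t h) as [c [_ E]]; [intros; auto|]. lra.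
Qed.

Lemma nonincr_of_deriv (f df : R -> R) : (forall t, is_derive f t (df t)) -> (forall t, df t <= 0) ->
  forall t s, t <= s -> f s <= f t.
Proof.
  intros H Hd t s h. destruct (Req_dec t s) as [->|]; [lra|].
  destruct (mvt f df t s ltac:(lra)) as [c [_ E]]; [intros; auto|].
  specialize (Hd c). nra.
Qed.

Lemma H_conserved ba bv c n p q : (1 <= n)%nat -> is_solution ba bv c n p q ->
  forall t, Hfun ba bv c n (p t) (q t) = Hfun ba bv c n (p 0) (q 0).
Proof.
  intros Hn Hs t. apply (const_of_deriv0 (fun t => Hfun ba bv c n (p t) (q t))).
  intros s. destruct (Hs s) as (Hp & Hq & Dp & Dq). unfold in01 in *.
  unfold Hfun.
  eapply isd_ext; [intros; reflexivity|].
  replace 0 with (fp ba bv c n (p s) (q s) * (Bf bv c n (p s) / (p s * (1 - p s)))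
                 - fq ba bv c n (p s) (q s) * (Af ba bv c n (q s) / (q s * (1 - q s)))).
  2:{ pose proof (INR_n1_pos n). unfold fp, fq, Af, Bf. field. repeat split; lra. }
  apply isd_minus.
  - apply (isd_comp (Rfun ba bv c n) p); auto. apply Rfun_derive; auto.
  - apply (isd_comp (Sfun ba bv c n) q); auto. apply Sfun_derive; auto.
Qed.

Lemma kab k C a b : -C <= k <= C -> k * a * b <= C * (a * a + b * b) / 2 /\ - (C * (a * a + b * b) / 2) <= k * a * b.
Proof.
  intros Hk. assert (0 <= C) by lra.
  pose proof (Rle_0_sqr (a - b)). pose proof (Rle_0_sqr (a + b)). unfold Rsqr in *.
  assert (2 * (a * b) <= a * a + b * b) by lra. assert (- (a * a + b * b) <= 2 * (a * b)) by lra.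
  destruct (Rle_or_lt 0 (a * b)).
  - assert (0 <= (C - k) * (a * b)) by (apply Rmult_le_pos; lra).
    assert (0 <= (C + k) * (a * b)) by (apply Rmult_le_pos; lra). split; nra.
  - assert ((C - k) * (a * b) <= 0) by (apply Rmult_le_0_l; lra).
    assert ((C + k) * (a * b) <= 0) by (apply Rmult_le_0_l; lra). split; nra.
Qed.

Lemma geo_lip n x y : 0 <= x <= 1 -> 0 <= y <= 1 ->
  exists D, 0 <= D <= dgeo n 1 /\ geo n x - geo n y = D * (x - y).
Proof.
  intros Hx Hy. destruct (Rtotal_order x y) as [h|[h|h]].
  - destruct (mvt (geo n) (dgeo n) x y h) as [z [Hz E]]; [intros; apply geo_derive|].
    exists (dgeo n z). split. apply dgeo_bound; lra. lra.
  - subst. exists 0. split; [|lra]. split; [lra|]. apply (dgeo_bound n 1); lra.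
  - destruct (mvt (geo n) (dgeo n) y x h) as [z [Hz E]]; [intros; apply geo_derive|].
    exists (dgeo n z). split. apply dgeo_bound; lra. lra.
Qed.

Lemma geo_le_one n x : (1 <= n)%nat -> 0 <= x <= 1 -> geo n x <= INR (n + 1).
Proof. intros. rewrite <- geo_one. pose proof (geo_gap n x 1 H ltac:(lra)). lra. Qed.

Definition LipC n ba bv c := ba / INR (n + 1) + (bv - c) + bv + c + bv / INR (n + 1) * dgeo n 1.

Lemma gder_bound n ba bv c p1 q1 p2 q2 : Hyp n ba bv c -> in01 p1 -> in01 q1 -> in01 p2 -> in01 q2 ->
  let e := 2 * (p1 - p2) * (fp ba bv c n p1 q1 - fp ba bv c n p2 q2)
         + 2 * (q1 - q2) * (fq ba bv c n p1 q1 - fq ba bv c n p2 q2) in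
  let g := (p1 - p2) * (p1 - p2) + (q1 - q2) * (q1 - q2) in
  e <= 4 * LipC n ba bv c * g /\ - (4 * LipC n ba bv c * g) <= e.
Proof.
  intros H H1 H2 H3 H4 e g. unfold in01 in *.
  pose proof (Hyp_bvc _ _ _ _ H) as Hcb.
  pose proof H as (Hn & Ha & Hb & Hc & Hi1 & Hi2). pose proof (INR_n1_pos n) as Hp.
  set (a := ba / INR (n + 1)) in *. set (ga := bv / INR (n + 1)) in *.
  assert (Ha0 : 0 < a) by (apply Rdiv_lt_0_compat; lra).
  assert (Hga : 0 < ga) by (apply Rdiv_lt_0_compat; lra).
  pose proof (dgeo_bound n 1 ltac:(lra)) as Hdg.
  destruct (geo_lip n p1 p2 ltac:(lra) ltac:(lra)) as [D [HD ED]].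
  set (C := LipC n ba bv c).
  assert (HC : C = a + (bv - c) + bv + c + ga * dgeo n 1) by reflexivity.
  set (k1 := (1 - p1 - p2) * (a - q1 * (bv - c))).
  set (k2 := - (p2 * (1 - p2) * (bv - c))).
  set (B1 := ga * geo n p1 - c).
  set (k3 := (1 - q1 - q2) * B1).
  set (k4 := q2 * (1 - q2) * ga * D).
  assert (E1 : fp ba bv c n p1 q1 - fp ba bv c n p2 q2 = (p1 - p2) * k1 + (q1 - q2) * k2).
  { unfold fp, k1, k2. fold a. ring. }
  assert (E2 : fq ba bv c n p1 q1 - fq ba bv c n p2 q2 = (q1 - q2) * k3 + (p1 - p2) * k4).
  { unfold fq, k3, k4, B1. fold ga.
    assert (G1 : geo n p1 = geo n p2 + D * (p1 - p2)) by lra. rewrite G1. ring. }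
  assert (Eg : e = 2 * (k1 * (p1 - p2) * (p1 - p2)) + 2 * (k2 * (p1 - p2) * (q1 - q2))
               + 2 * (k3 * (q1 - q2) * (q1 - q2)) + 2 * (k4 * (p1 - p2) * (q1 - q2))).
  { unfold e. rewrite E1, E2. ring. }
  assert (0 <= ga * dgeo n 1) by nra.
  assert (Hk1 : -C <= k1 <= C).
  { unfold k1. assert (a - (bv - c) <= a - q1 * (bv - c) <= a) by nra. split; nra. }
  assert (Hk2 : -C <= k2 <= C).
  { unfold k2. assert (0 <= p2 * (1 - p2) <= 1) by nra. split; nra. }
  assert (HB1 : - c <= B1 <= bv).
  { unfold B1. pose proof (geo_pos n p1 ltac:(lra)). pose proof (geo_le_one n p1 Hn ltac:(lra)).
    assert (ga * INR (n + 1) = bv) by (unfold ga; field; lra). split; nra. }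
  assert (Hk3 : -C <= k3 <= C). { unfold k3. split; nra. }
  assert (Hk4 : -C <= k4 <= C).
  { unfold k4. assert (0 <= q2 * (1 - q2) <= 1) by nra. assert (0 <= ga * D <= ga * dgeo n 1) by nra.
    split; nra. }
  destruct (kab k1 C (p1 - p2) (p1 - p2) Hk1).
  destruct (kab k2 C (p1 - p2) (q1 - q2) Hk2).
  destruct (kab k3 C (q1 - q2) (q1 - q2) Hk3).
  destruct (kab k4 C (p1 - p2) (q1 - q2) Hk4).
  unfold g. rewrite Eg. split; lra.
Qed.

Lemma isd_sq (f : R -> R) x a : is_derive f x a -> is_derive (fun s => f s * f s) x (2 * f x * a).
Proof. intros H. eapply isd_ext; [intros; reflexivity|].
  replace (2 * f x * a) with (a * f x + f x * a) by ring. apply isd_mult; auto. Qed.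

Lemma isd_lin k x : is_derive (fun s => k * s) x k.
Proof. pose proof (is_derive_scal (fun s => s) x k 1 (is_derive_id x)). now rewrite Rmult_1_r in H. Qed.

Lemma uniq_sol n ba bv c p1 q1 p2 q2 : Hyp n ba bv c ->
  is_solution ba bv c n p1 q1 -> is_solution ba bv c n p2 q2 ->
  p1 0 = p2 0 -> q1 0 = q2 0 -> forall t, p1 t = p2 t /\ q1 t = q2 t.
Proof.
  intros H S1 S2 E1 E2.
  set (g := fun t => (p1 t - p2 t) * (p1 t - p2 t) + (q1 t - q2 t) * (q1 t - q2 t)).
  set (dg := fun t => 2 * (p1 t - p2 t) * (fp ba bv c n (p1 t) (q1 t) - fp ba bv c n (p2 t) (q2 t))
         + 2 * (q1 t - q2 t) * (fq ba bv c n (p1 t) (q1 t) - fq ba bv c n (p2 t) (q2 t))).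
  set (K := 4 * LipC n ba bv c).
  assert (Dg : forall t, is_derive g t (dg t)).
  { intros t. destruct (S1 t) as (_ & _ & D1 & D2). destruct (S2 t) as (_ & _ & D3 & D4).
    unfold g, dg. apply isd_plus.
    apply (isd_sq (fun s => p1 s - p2 s)). apply isd_minus; auto.
    apply (isd_sq (fun s => q1 s - q2 s)). apply isd_minus; auto. }
  assert (Bd : forall t, dg t <= K * g t /\ - (K * g t) <= dg t).
  { intros t. destruct (S1 t) as (A1 & A2 & _). destruct (S2 t) as (A3 & A4 & _).
    apply (gder_bound n ba bv c (p1 t) (q1 t) (p2 t) (q2 t) H A1 A2 A3 A4). }
  assert (g0 : g 0 = 0) by (unfold g; rewrite E1, E2; ring).
  assert (gpos : forall t, 0 <= g t).
  { intros t; unfold g. pose proof (Rle_0_sqr (p1 t - p2 t)). pose proof (Rle_0_sqr (q1 t - q2 t)).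
    unfold Rsqr in *. lra. }
  assert (gz : forall t, g t = 0).
  { intros t. destruct (Rle_or_lt 0 t) as [ht|ht].
    - set (phi := fun s => g s * exp (- K * s)).
      assert (Dphi : forall s, is_derive phi s (dg s * exp (- K * s) + g s * (- K * exp (- K * s)))).
      { intros s. unfold phi. apply (isd_mult g (fun s => exp (- K * s))); auto.
        replace (- K * exp (- K * s)) with ((- K) * exp (- K * s)) by ring.
        apply (isd_comp exp (fun s => - K * s)). apply is_derive_exp.
        apply isd_lin. }
      pose proof (nonincr_of_deriv phi _ Dphi) as M.
      assert (forall s, dg s * exp (- K * s) + g s * (- K * exp (- K * s)) <= 0).
      { intros s. pose proof (exp_pos (- K * s)). destruct (Bd s). nra. }
      specialize (M H0 0 t ht). unfold phi in M. rewrite g0, Rmult_0_l in M.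
      pose proof (exp_pos (- K * t)). pose proof (gpos t). nra.
    - set (phi := fun s => - (g s * exp (K * s))).
      assert (Dphi : forall s, is_derive phi s (- (dg s * exp (K * s) + g s * (K * exp (K * s))))).
      { intros s. unfold phi. apply (is_derive_opp (fun s => g s * exp (K * s))).
        apply (isd_mult g (fun s => exp (K * s))); auto.
        apply (isd_comp exp (fun s => K * s)). apply is_derive_exp.
        apply isd_lin. }
      pose proof (nonincr_of_deriv phi _ Dphi) as M.
      assert (forall s, - (dg s * exp (K * s) + g s * (K * exp (K * s))) <= 0).
      { intros s. pose proof (exp_pos (K * s)). destruct (Bd s). nra. }
      specialize (M H0 t 0 ltac:(lra)). unfold phi in M. rewrite g0, Rmult_0_l in M.
      pose proof (exp_pos (K * t)). pose proof (gpos t). nra. }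
  intros t. specialize (gz t). unfold g in gz.
  pose proof (Rle_0_sqr (p1 t - p2 t)). pose proof (Rle_0_sqr (q1 t - q2 t)). unfold Rsqr in *.
  split; nra.
Qed.

Lemma shift_sol ba bv c n p q T : is_solution ba bv c n p q ->
  is_solution ba bv c n (fun t => p (t + T)) (fun t => q (t + T)).
Proof.
  intros H t. destruct (H (t + T)) as (A1 & A2 & D1 & D2).
  assert (Ds : is_derive (fun s => s + T) t 1) by (auto_derive; auto; ring).
  split; [exact A1|split; [exact A2|split]].
  - rewrite <- (Rmult_1_l (fp _ _ _ _ _ _)). apply (isd_comp p (fun s => s + T)); auto.
  - rewrite <- (Rmult_1_l (fq _ _ _ _ _ _)). apply (isd_comp q (fun s => s + T)); auto.
Qed.

Lemma cont_eps f x : continuity_pt f x -> forall eps, 0 < eps ->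
  exists d, 0 < d /\ forall y, Rabs (y - x) < d -> Rabs (f y - f x) < eps.
Proof.
  intros H eps He. destruct (H eps He) as [d [Hd Hy]]. exists d; split; auto.
  intros y Hyd. destruct (Req_dec y x) as [->|Hne].
  - rewrite Rminus_diag, Rabs_R0; lra.
  - apply (Hy y). split. split; [exact I| auto]. exact Hyd.
Qed.

Lemma first_zero (f : R -> R) a b : (forall x, continuity_pt f x) -> a < b -> f a > 0 -> f b <= 0 ->
  exists c, a < c <= b /\ f c = 0 /\ forall t, a <= t < c -> f t > 0.
Proof.
  intros Hc Hab Ha Hb.
  set (E := fun s => a <= s <= b /\ forall t, a <= t <= s -> f t > 0).
  assert (HE : exists x, E x). { exists a. split; [lra|]. intros t Ht. replace t with a by lra. auto. }
  assert (HB : bound E). { exists b. intros s [Hs _]. lra. }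
  destruct (completeness E HB HE) as [m [Hub Hlub]].
  assert (Ham : a <= m). { apply Hub. destruct HE. unfold E. split; [lra|]. intros t Ht. replace t with a by lra. auto. }
  assert (Hmb : m <= b). { apply Hlub. intros s [Hs _]. lra. }
  assert (P : forall t, a <= t < m -> f t > 0).
  { intros t Ht. destruct (classic (exists s, E s /\ t < s)) as [[s [[_ Hs] Hts]]|Hn].
    - apply Hs; lra.
    - exfalso. assert (is_upper_bound E t).
      { intros s Es. destruct (Rle_or_lt s t); auto. exfalso; apply Hn; eauto. }
      specialize (Hlub t H). lra. }
  assert (F1 : f m <= 0).
  { destruct (Rle_or_lt (f m) 0) as [h|h]; auto. exfalso.
    destruct (Req_dec m b) as [->|Hne]; [lra|].
    destruct (cont_eps f m (Hc m) (f m) h) as [d [Hd Hy]].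
    set (s := Rmin b (m + d / 2)).
    assert (Hs1 : m < s). { unfold s. apply Rmin_glb_lt; lra. }
    assert (Hs2 : s <= b) by apply Rmin_l.
    assert (Hs3 : s <= m + d / 2) by apply Rmin_r.
    assert (E s).
    { split; [lra|]. intros t Ht. destruct (Rlt_or_le t m). apply P; lra.
      assert (Rabs (t - m) < d) by (rewrite Rabs_right; lra).
      specialize (Hy t H0). apply Rabs_def2 in Hy. lra. }
    specialize (Hub s H). lra. }
  assert (F2 : 0 <= f m).
  { destruct (Rle_or_lt 0 (f m)) as [h|h]; auto. exfalso.
    destruct (Req_dec m a) as [->|Hne]; [lra|].
    destruct (cont_eps f m (Hc m) (- f m) ltac:(lra)) as [d [Hd Hy]].
    set (s := Rmax a (m - d / 2)).
    assert (Hs1 : s < m). { unfold s. apply Rmax_lub_lt; lra. }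
    assert (Hs2 : a <= s) by apply Rmax_l.
    assert (Hs3 : m - d / 2 <= s) by apply Rmax_r.
    assert (Rabs (s - m) < d) by (rewrite Rabs_left; lra).
    specialize (Hy s H). apply Rabs_def2 in Hy. specialize (P s ltac:(lra)). lra. }
  exists m. assert (f m = 0) by lra. split; [|split; auto].
  split; auto. destruct (Req_dec m a) as [->|]; [lra|lra].
Qed.

Lemma stage (u v du dv : R -> R) :
  (forall t, is_derive u t (du t)) -> (forall t, is_derive v t (dv t)) ->
  (forall t, u t > 0 -> dv t > 0) ->
  (forall y1, 0 < y1 -> exists k, 0 < k /\ forall t, y1 <= v t -> du t <= - k) ->
  forall t0, u t0 > 0 -> v t0 >= 0 ->
  exists t1, t0 < t1 /\ u t1 = 0 /\ v t1 > 0 /\ (forall t, t0 <= t <= t1 -> v t >= v t0) /\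
    (forall x, 0 <= x <= u t0 -> exists t, t0 <= t <= t1 /\ u t = x).
Proof.
  intros Du Dv H1 H2 t0 Hu0 Hv0.
  assert (Cu : forall x, continuity_pt u x) by (intros; eapply cont_der; apply Du).
  assert (Ex : exists t2, t0 < t2 /\ u t2 <= 0).
  { destruct (classic (exists t2, t0 < t2 /\ u t2 <= 0)) as [h|h]; auto. exfalso.
    assert (Pos : forall t, t0 <= t -> u t > 0).
    { intros t Ht. destruct (Req_dec t t0) as [->|]; auto. destruct (Rle_or_lt (u t) 0); auto.
      exfalso; apply h; exists t; split; lra. }
    assert (Vinc : forall s t, t0 <= s -> s < t -> v s < v t).
    { intros s t Hs Hst. destruct (mvt v dv s t Hst) as [c [Hc E]]; [intros; auto|].
      specialize (H1 c (Pos c ltac:(lra))). nra. }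
    set (y1 := v (t0 + 1)).
    assert (Hy1 : 0 < y1) by (unfold y1; specialize (Vinc t0 (t0 + 1) ltac:(lra) ltac:(lra)); lra).
    destruct (H2 y1 Hy1) as [k [Hk Hdu]].
    set (T := t0 + 1 + (u (t0 + 1) / k) + 1).
    assert (Hu1 : u (t0 + 1) > 0) by (apply Pos; lra).
    assert (0 < u (t0 + 1) / k) by (apply Rdiv_lt_0_compat; lra).
    destruct (mvt u du (t0 + 1) T ltac:(unfold T; lra)) as [c [Hc E]]; [intros; auto|].
    assert (du c <= - k).
    { apply Hdu. unfold y1. destruct (Req_dec c (t0 + 1)) as [->|]; [lra|].
      left. apply Vinc; lra. }
    assert (u T > 0) by (apply Pos; unfold T; lra).
    assert (T - (t0 + 1) = u (t0 + 1) / k + 1) by (unfold T; ring).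
    assert (k * (u (t0 + 1) / k) = u (t0 + 1)) by (field; lra).
    nra. }
  destruct Ex as [t2 [Ht2 Hu2]].
  destruct (first_zero u t0 t2 Cu Ht2 Hu0 Hu2) as [t1 [Ht1 [Hz Hpos]]].
  assert (Vge : forall t, t0 < t <= t1 -> v t > v t0).
  { intros t Ht. destruct (mvt v dv t0 t ltac:(lra)) as [c [Hc E]]; [intros; auto|].
    specialize (H1 c (Hpos c ltac:(lra))). nra. }
  exists t1. split; [lra|]. split; auto. split. specialize (Vge t1 ltac:(lra)); lra.
  split.
  - intros t Ht. destruct (Req_dec t t0) as [->|]; [lra|]. specialize (Vge t ltac:(lra)); lra.
  - intros x Hx. destruct (IVT_gen u t0 t1 x) as [t [Ht Htx]].
    + intros y. apply Cu.
    + rewrite Hz. rewrite Rmin_right, Rmax_left; lra.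
    + rewrite Rmin_left, Rmax_right in Ht by lra. exists t; auto.
Qed.

Definition Ctx n ba bv c ps (p q : R -> R) m0 :=
  Hyp n ba bv c /\ (0 < ps < 1 /\ geo n ps = c * INR (n + 1) / bv) /\
  is_solution ba bv c n p q /\ 0 < m0 /\
  (forall t, m0 <= p t * (1 - p t) /\ m0 <= q t * (1 - q t)).

Lemma isd_subc (f : R -> R) t a k : is_derive f t a -> is_derive (fun s => f s - k) t a.
Proof. intros. eapply isd_ext; [intros; reflexivity|]. replace a with (a - 0) by ring.
  apply isd_minus; auto. apply (is_derive_const k). Qed.

Lemma isd_csub (f : R -> R) t a k : is_derive f t a -> is_derive (fun s => k - f s) t (- a).
Proof. intros. eapply isd_ext; [intros; reflexivity|]. replace (- a) with (0 - a) by ring.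
  apply isd_minus; auto. apply (is_derive_const k). Qed.

Lemma fp_eq n ba bv c p q : Hyp n ba bv c ->
  fp ba bv c n p q = p * (1 - p) * ((bv - c) * (qsv ba bv c n - q)).
Proof. intros H. unfold fp. rewrite <- (Af_eq n ba bv c q H). reflexivity. Qed.

Lemma fq_eq ba bv c n p q : fq ba bv c n p q = q * (1 - q) * Bf bv c n p.
Proof. reflexivity. Qed.

Ltac ctx H := let Hy := fresh "Hy" in let Hp := fresh "Hp" in let Hs := fresh "Hs" in
  let Hm := fresh "Hm" in let Hb := fresh "Hb" in
  destruct H as (Hy & Hp & Hs & Hm & Hb).

Lemma st1 n ba bv c ps p q m0 : Ctx n ba bv c ps p q m0 ->
  forall t0, p t0 - ps > 0 -> q t0 - qsv ba bv c n >= 0 ->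
  exists t1, t0 < t1 /\ p t1 - ps = 0 /\ q t1 - qsv ba bv c n > 0 /\
    (forall t, t0 <= t <= t1 -> q t - qsv ba bv c n >= q t0 - qsv ba bv c n) /\
    (forall x, 0 <= x <= p t0 - ps -> exists t, t0 <= t <= t1 /\ p t - ps = x).
Proof.
  intros C. pose proof C as (Hy & [Hp Hg] & Hs & Hm & Hb).
  pose proof (Hyp_bvc _ _ _ _ Hy). pose proof (INR_n1_pos n).
  assert (0 < bv / INR (n + 1)) by (destruct Hy as (_&_&?&_); apply Rdiv_lt_0_compat; lra).
  apply (stage (fun t => p t - ps) (fun t => q t - qsv ba bv c n)
    (fun t => fp ba bv c n (p t) (q t)) (fun t => fq ba bv c n (p t) (q t))).
  - intros t. apply isd_subc. apply (Hs t).
  - intros t. apply isd_subc. apply (Hs t).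
  - intros t Ht. rewrite fq_eq. destruct (Hb t) as [_ Hq].
    pose proof (Bf_ge n ba bv c ps (p t) Hy ltac:(lra) Hg ltac:(lra)).
    assert (0 < bv / INR (n + 1) * (p t - ps)) by (apply Rmult_lt_0_compat; lra).
    apply Rmult_lt_0_compat; lra.
  - intros y1 Hy1. exists (m0 * ((bv - c) * y1)). split. apply Rmult_lt_0_compat; nra.
    intros t Ht. rewrite fp_eq by auto. destruct (Hb t) as [Hpt _].
    assert ((bv - c) * (qsv ba bv c n - q t) <= - ((bv - c) * y1)) by nra.
    assert (0 < (bv - c) * y1) by nra. nra.
Qed.

Lemma st2 n ba bv c ps p q m0 : Ctx n ba bv c ps p q m0 ->
  forall t0, q t0 - qsv ba bv c n > 0 -> ps - p t0 >= 0 ->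
  exists t1, t0 < t1 /\ q t1 - qsv ba bv c n = 0 /\ ps - p t1 > 0 /\
    (forall t, t0 <= t <= t1 -> ps - p t >= ps - p t0) /\
    (forall x, 0 <= x <= q t0 - qsv ba bv c n -> exists t, t0 <= t <= t1 /\ q t - qsv ba bv c n = x).
Proof.
  intros C. pose proof C as (Hy & [Hp Hg] & Hs & Hm & Hb).
  pose proof (Hyp_bvc _ _ _ _ Hy). pose proof (INR_n1_pos n).
  assert (0 < bv / INR (n + 1)) by (destruct Hy as (_&_&?&_); apply Rdiv_lt_0_compat; lra).
  apply (stage (fun t => q t - qsv ba bv c n) (fun t => ps - p t)
    (fun t => fq ba bv c n (p t) (q t)) (fun t => - fp ba bv c n (p t) (q t))).
  - intros t. apply isd_subc. apply (Hs t).
  - intros t. apply isd_csub. apply (Hs t).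
  - intros t Ht. rewrite fp_eq by auto. destruct (Hb t) as [Hpt _].
    assert ((bv - c) * (qsv ba bv c n - q t) < 0) by nra. nra.
  - intros y1 Hy1. exists (m0 * (bv / INR (n + 1) * y1)). split. apply Rmult_lt_0_compat; nra.
    intros t Ht. rewrite fq_eq. destruct (Hb t) as [_ Hq]. destruct (Hs t) as ([Hp0 _] & _).
    pose proof (Bf_le n ba bv c ps (p t) Hy Hg ltac:(lra)).
    assert (bv / INR (n + 1) * y1 <= bv / INR (n + 1) * (ps - p t)) by (apply Rmult_le_compat_l; lra).
    assert (0 < bv / INR (n + 1) * y1) by nra. nra.
Qed.

Lemma st3 n ba bv c ps p q m0 : Ctx n ba bv c ps p q m0 ->
  forall t0, ps - p t0 > 0 -> qsv ba bv c n - q t0 >= 0 ->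
  exists t1, t0 < t1 /\ ps - p t1 = 0 /\ qsv ba bv c n - q t1 > 0 /\
    (forall t, t0 <= t <= t1 -> qsv ba bv c n - q t >= qsv ba bv c n - q t0) /\
    (forall x, 0 <= x <= ps - p t0 -> exists t, t0 <= t <= t1 /\ ps - p t = x).
Proof.
  intros C. pose proof C as (Hy & [Hp Hg] & Hs & Hm & Hb).
  pose proof (Hyp_bvc _ _ _ _ Hy). pose proof (INR_n1_pos n).
  assert (0 < bv / INR (n + 1)) by (destruct Hy as (_&_&?&_); apply Rdiv_lt_0_compat; lra).
  apply (stage (fun t => ps - p t) (fun t => qsv ba bv c n - q t)
    (fun t => - fp ba bv c n (p t) (q t)) (fun t => - fq ba bv c n (p t) (q t))).
  - intros t. apply isd_csub. apply (Hs t).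
  - intros t. apply isd_csub. apply (Hs t).
  - intros t Ht. rewrite fq_eq. destruct (Hb t) as [_ Hq]. destruct (Hs t) as ([Hp0 _] & _).
    pose proof (Bf_le n ba bv c ps (p t) Hy Hg ltac:(lra)).
    assert (0 < bv / INR (n + 1) * (ps - p t)) by (apply Rmult_lt_0_compat; lra).
    nra.
  - intros y1 Hy1. exists (m0 * ((bv - c) * y1)). split. apply Rmult_lt_0_compat; nra.
    intros t Ht. rewrite fp_eq by auto. destruct (Hb t) as [Hpt _].
    assert ((bv - c) * y1 <= (bv - c) * (qsv ba bv c n - q t)) by nra.
    assert (0 < (bv - c) * y1) by nra. nra.
Qed.

Lemma st4 n ba bv c ps p q m0 : Ctx n ba bv c ps p q m0 ->
  forall t0, qsv ba bv c n - q t0 > 0 -> p t0 - ps >= 0 ->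
  exists t1, t0 < t1 /\ qsv ba bv c n - q t1 = 0 /\ p t1 - ps > 0 /\
    (forall t, t0 <= t <= t1 -> p t - ps >= p t0 - ps) /\
    (forall x, 0 <= x <= qsv ba bv c n - q t0 -> exists t, t0 <= t <= t1 /\ qsv ba bv c n - q t = x).
Proof.
  intros C. pose proof C as (Hy & [Hp Hg] & Hs & Hm & Hb).
  pose proof (Hyp_bvc _ _ _ _ Hy). pose proof (INR_n1_pos n).
  assert (0 < bv / INR (n + 1)) by (destruct Hy as (_&_&?&_); apply Rdiv_lt_0_compat; lra).
  apply (stage (fun t => qsv ba bv c n - q t) (fun t => p t - ps)
    (fun t => - fq ba bv c n (p t) (q t)) (fun t => fp ba bv c n (p t) (q t))).
  - intros t. apply isd_csub. apply (Hs t).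
  - intros t. apply isd_subc. apply (Hs t).
  - intros t Ht. rewrite fp_eq by auto. destruct (Hb t) as [Hpt _].
    assert (0 < (bv - c) * (qsv ba bv c n - q t)) by nra. nra.
  - intros y1 Hy1. exists (m0 * (bv / INR (n + 1) * y1)). split. apply Rmult_lt_0_compat; nra.
    intros t Ht. rewrite fq_eq. destruct (Hb t) as [_ Hq].
    pose proof (Bf_ge n ba bv c ps (p t) Hy ltac:(lra) Hg ltac:(lra)).
    assert (bv / INR (n + 1) * y1 <= bv / INR (n + 1) * (p t - ps)) by (apply Rmult_le_compat_l; lra).
    assert (0 < bv / INR (n + 1) * y1) by nra. nra.
Qed.

Lemma R_inj_hi n ba bv c ps x y : Hyp n ba bv c -> 0 < ps < 1 -> geo n ps = c * INR (n + 1) / bv ->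
  ps <= x < 1 -> ps <= y < 1 -> Rfun ba bv c n x = Rfun ba bv c n y -> x = y.
Proof.
  intros H Hp Hg Hx Hy E. destruct (Rtotal_order x y) as [h|[h|h]]; auto.
  - pose proof (R_inc n ba bv c ps x y H ltac:(lra) Hg ltac:(lra) h ltac:(lra)); lra.
  - pose proof (R_inc n ba bv c ps y x H ltac:(lra) Hg ltac:(lra) h ltac:(lra)); lra.
Qed.

Lemma R_inj_lo n ba bv c ps x y : Hyp n ba bv c -> 0 < ps < 1 -> geo n ps = c * INR (n + 1) / bv ->
  0 < x <= ps -> 0 < y <= ps -> Rfun ba bv c n x = Rfun ba bv c n y -> x = y.
Proof.
  intros H Hp Hg Hx Hy E. destruct (Rtotal_order x y) as [h|[h|h]]; auto.
  - pose proof (R_dec n ba bv c ps x y H ltac:(lra) Hg ltac:(lra) h ltac:(lra)); lra.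
  - pose proof (R_dec n ba bv c ps y x H ltac:(lra) Hg ltac:(lra) h ltac:(lra)); lra.
Qed.

Lemma R_min n ba bv c ps x : Hyp n ba bv c -> 0 < ps < 1 -> geo n ps = c * INR (n + 1) / bv ->
  0 < x < 1 -> Rfun ba bv c n ps <= Rfun ba bv c n x /\ (x <> ps -> Rfun ba bv c n ps < Rfun ba bv c n x).
Proof.
  intros H Hp Hg Hx. destruct (Rtotal_order x ps) as [h|[h|h]].
  - pose proof (R_dec n ba bv c ps x ps H ltac:(lra) Hg ltac:(lra) h ltac:(lra)). split; [lra|auto].
  - subst; split; [lra| intros []; auto].
  - pose proof (R_inc n ba bv c ps ps x H ltac:(lra) Hg ltac:(lra) h ltac:(lra)). split; [lra|auto].
Qed.

Lemma S_inj_hi n ba bv c x y : Hyp n ba bv c ->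
  qsv ba bv c n <= x < 1 -> qsv ba bv c n <= y < 1 -> Sfun ba bv c n x = Sfun ba bv c n y -> x = y.
Proof.
  intros H Hx Hy E. destruct (Rtotal_order x y) as [h|[h|h]]; auto.
  - pose proof (S_dec n ba bv c x y H ltac:(lra) h ltac:(lra)); lra.
  - pose proof (S_dec n ba bv c y x H ltac:(lra) h ltac:(lra)); lra.
Qed.

Lemma S_inj_lo n ba bv c x y : Hyp n ba bv c ->
  0 < x <= qsv ba bv c n -> 0 < y <= qsv ba bv c n -> Sfun ba bv c n x = Sfun ba bv c n y -> x = y.
Proof.
  intros H Hx Hy E. destruct (Rtotal_order x y) as [h|[h|h]]; auto.
  - pose proof (S_inc n ba bv c x y H ltac:(lra) h ltac:(lra)); lra.
  - pose proof (S_inc n ba bv c y x H ltac:(lra) h ltac:(lra)); lra.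
Qed.

Lemma S_max n ba bv c y : Hyp n ba bv c -> 0 < y < 1 ->
  Sfun ba bv c n y <= Sfun ba bv c n (qsv ba bv c n) /\
  (y <> qsv ba bv c n -> Sfun ba bv c n y < Sfun ba bv c n (qsv ba bv c n)).
Proof.
  intros H Hy. pose proof (qs_in _ _ _ _ H). destruct (Rtotal_order y (qsv ba bv c n)) as [h|[h|h]].
  - pose proof (S_inc n ba bv c y (qsv ba bv c n) H ltac:(lra) h ltac:(lra)). split; [lra|auto].
  - rewrite h; split; [lra| intros []; auto].
  - pose proof (S_dec n ba bv c (qsv ba bv c n) y H ltac:(lra) h ltac:(lra)). split; [lra|auto].
Qed.

Lemma cov1 n ba bv c ps p q m0 h t0 : Ctx n ba bv c ps p q m0 ->
  (forall t, Hfun ba bv c n (p t) (q t) = h) -> p t0 > ps -> q t0 = qsv ba bv c n ->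
  (exists t1, t0 < t1 /\ q t1 > qsv ba bv c n /\ p t1 = ps) /\
  (forall x y, in01 x -> in01 y -> ps <= x -> qsv ba bv c n <= y -> Hfun ba bv c n x y = h ->
    exists t, p t = x /\ q t = y).
Proof.
  intros C Hc R1 R2. pose proof C as (Hy & [Hp Hg] & Hs & Hm & Hb).
  destruct (st1 _ _ _ _ _ _ _ _ C t0 ltac:(lra) ltac:(lra)) as (t1 & Ht1 & E1 & E2 & Hv & Hcov).
  split. { exists t1. split; [lra|]. split; lra. }
  intros x y Hx Hy' Hxp Hyq HH. unfold in01 in *.
  destruct (Hs t0) as (Hp0 & Hq0 & _).
  assert (x <= p t0).
  { destruct (Rle_or_lt x (p t0)) as [|hl]; auto. exfalso.
    pose proof (R_inc n ba bv c ps (p t0) x Hy ltac:(lra) Hg ltac:(lra) hl ltac:(lra)).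
    pose proof (S_max n ba bv c y Hy Hy'). specialize (Hc t0). unfold Hfun in *. rewrite R2 in Hc. lra. }
  destruct (Hcov (x - ps) ltac:(lra)) as [t [Ht Hpt]].
  specialize (Hv t Ht). destruct (Hs t) as (Hpt' & Hqt & _). unfold in01 in *.
  exists t. split; [lra|].
  apply (S_inj_hi n ba bv c); auto; try lra.
  specialize (Hc t). unfold Hfun in *. replace (p t) with x in Hc by lra. lra.
Qed.

Lemma cov2 n ba bv c ps p q m0 h t0 : Ctx n ba bv c ps p q m0 ->
  (forall t, Hfun ba bv c n (p t) (q t) = h) -> q t0 > qsv ba bv c n -> p t0 = ps ->
  (exists t1, t0 < t1 /\ p t1 < ps /\ q t1 = qsv ba bv c n) /\
  (forall x y, in01 x -> in01 y -> x <= ps -> qsv ba bv c n <= y -> Hfun ba bv c n x y = h ->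
    exists t, p t = x /\ q t = y).
Proof.
  intros C Hc R1 R2. pose proof C as (Hy & [Hp Hg] & Hs & Hm & Hb).
  destruct (st2 _ _ _ _ _ _ _ _ C t0 ltac:(lra) ltac:(lra)) as (t1 & Ht1 & E1 & E2 & Hv & Hcov).
  split. { exists t1. split; [lra|]. split; lra. }
  intros x y Hx Hy' Hxp Hyq HH. unfold in01 in *.
  destruct (Hs t0) as (Hp0 & Hq0 & _). unfold in01 in *.
  assert (y <= q t0).
  { destruct (Rle_or_lt y (q t0)) as [|hl]; auto. exfalso.
    pose proof (S_dec n ba bv c (q t0) y Hy ltac:(lra) hl ltac:(lra)).
    pose proof (R_min n ba bv c ps x Hy Hp Hg Hx). specialize (Hc t0). unfold Hfun in *. rewrite R2 in Hc. lra. }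
  destruct (Hcov (y - qsv ba bv c n) ltac:(lra)) as [t [Ht Hqt]].
  specialize (Hv t Ht). destruct (Hs t) as (Hpt & Hqt' & _). unfold in01 in *.
  exists t. split; [|lra].
  apply (R_inj_lo n ba bv c ps); auto; try lra.
  specialize (Hc t). unfold Hfun in *. replace (q t) with y in Hc by lra. lra.
Qed.

Lemma cov3 n ba bv c ps p q m0 h t0 : Ctx n ba bv c ps p q m0 ->
  (forall t, Hfun ba bv c n (p t) (q t) = h) -> p t0 < ps -> q t0 = qsv ba bv c n ->
  (exists t1, t0 < t1 /\ q t1 < qsv ba bv c n /\ p t1 = ps) /\
  (forall x y, in01 x -> in01 y -> x <= ps -> y <= qsv ba bv c n -> Hfun ba bv c n x y = h ->
    exists t, p t = x /\ q t = y).
Proof.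
  intros C Hc R1 R2. pose proof C as (Hy & [Hp Hg] & Hs & Hm & Hb).
  destruct (st3 _ _ _ _ _ _ _ _ C t0 ltac:(lra) ltac:(lra)) as (t1 & Ht1 & E1 & E2 & Hv & Hcov).
  split. { exists t1. split; [lra|]. split; lra. }
  intros x y Hx Hy' Hxp Hyq HH. unfold in01 in *.
  destruct (Hs t0) as (Hp0 & Hq0 & _). unfold in01 in *.
  assert (p t0 <= x).
  { destruct (Rle_or_lt (p t0) x) as [|hl]; auto. exfalso.
    pose proof (R_dec n ba bv c ps x (p t0) Hy ltac:(lra) Hg ltac:(lra) hl ltac:(lra)).
    pose proof (S_max n ba bv c y Hy Hy'). specialize (Hc t0). unfold Hfun in *. rewrite R2 in Hc. lra. }
  destruct (Hcov (ps - x) ltac:(lra)) as [t [Ht Hpt]].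
  specialize (Hv t Ht). destruct (Hs t) as (Hpt' & Hqt & _). unfold in01 in *.
  exists t. split; [lra|].
  apply (S_inj_lo n ba bv c); auto; try lra.
  specialize (Hc t). unfold Hfun in *. replace (p t) with x in Hc by lra. lra.
Qed.

Lemma cov4 n ba bv c ps p q m0 h t0 : Ctx n ba bv c ps p q m0 ->
  (forall t, Hfun ba bv c n (p t) (q t) = h) -> q t0 < qsv ba bv c n -> p t0 = ps ->
  (exists t1, t0 < t1 /\ p t1 > ps /\ q t1 = qsv ba bv c n) /\
  (forall x y, in01 x -> in01 y -> ps <= x -> y <= qsv ba bv c n -> Hfun ba bv c n x y = h ->
    exists t, p t = x /\ q t = y).
Proof.
  intros C Hc R1 R2. pose proof C as (Hy & [Hp Hg] & Hs & Hm & Hb).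
  destruct (st4 _ _ _ _ _ _ _ _ C t0 ltac:(lra) ltac:(lra)) as (t1 & Ht1 & E1 & E2 & Hv & Hcov).
  split. { exists t1. split; [lra|]. split; lra. }
  intros x y Hx Hy' Hxp Hyq HH. unfold in01 in *.
  destruct (Hs t0) as (Hp0 & Hq0 & _). unfold in01 in *.
  assert (q t0 <= y).
  { destruct (Rle_or_lt (q t0) y) as [|hl]; auto. exfalso.
    pose proof (S_inc n ba bv c y (q t0) Hy ltac:(lra) hl ltac:(lra)).
    pose proof (R_min n ba bv c ps x Hy Hp Hg Hx). specialize (Hc t0). unfold Hfun in *. rewrite R2 in Hc. lra. }
  destruct (Hcov (qsv ba bv c n - y) ltac:(lra)) as [t [Ht Hqt]].
  specialize (Hv t Ht). destruct (Hs t) as (Hpt & Hqt' & _). unfold in01 in *.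
  exists t. split; [|lra].
  apply (R_inj_hi n ba bv c ps); auto; try lra.
  specialize (Hc t). unfold Hfun in *. replace (q t) with y in Hc by lra. lra.
Qed.

Lemma get_ctx n ba bv c ps p q : Hyp n ba bv c -> 0 < ps < 1 -> geo n ps = c * INR (n + 1) / bv ->
  is_solution ba bv c n p q -> exists m0, Ctx n ba bv c ps p q m0.
Proof.
  intros H Hp Hg Hs. pose proof H as (Hn & _).
  destruct (blowup n ba bv c H (Hfun ba bv c n (p 0) (q 0))) as [d [Hd Hbl]].
  exists (d * d). split; auto. split; auto. split; auto. split. nra.
  intros t. destruct (Hs t) as (Hpt & Hqt & _).
  pose proof (H_conserved ba bv c n p q Hn Hs t) as Hc.
  assert (Nn : ~ (p t < d \/ 1 - d < p t \/ q t < d \/ 1 - d < q t)).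
  { intros Hor. specialize (Hbl _ _ Hpt Hqt Hor). lra. }
  assert (A1 : d <= p t) by (destruct (Rlt_or_le (p t) d); [exfalso; apply Nn; tauto| auto]).
  assert (A2 : d <= 1 - p t) by (destruct (Rlt_or_le (1 - d) (p t)); [exfalso; apply Nn; tauto| lra]).
  assert (A3 : d <= q t) by (destruct (Rlt_or_le (q t) d); [exfalso; apply Nn; tauto| auto]).
  assert (A4 : d <= 1 - q t) by (destruct (Rlt_or_le (1 - d) (q t)); [exfalso; apply Nn; tauto| lra]).
  split; apply Rmult_le_compat; lra.
Qed.

Lemma orbit n ba bv c ps p q : Hyp n ba bv c -> 0 < ps < 1 -> geo n ps = c * INR (n + 1) / bv ->
  is_solution ba bv c n p q -> (p 0, q 0) <> (ps, qsv ba bv c n) ->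
  exists T, 0 < T /\
    (forall t, p (t + T) = p t /\ q (t + T) = q t) /\
    (forall x y, in01 x -> in01 y ->
       Hfun ba bv c n x y = Hfun ba bv c n (p 0) (q 0) -> exists t, p t = x /\ q t = y).
Proof.
  intros H Hp Hg Hs Hne. pose proof H as (Hn & _).
  destruct (get_ctx n ba bv c ps p q H Hp Hg Hs) as [m0 C].
  set (h := Hfun ba bv c n (p 0) (q 0)).
  assert (Hc : forall t, Hfun ba bv c n (p t) (q t) = h) by (intros; apply H_conserved; auto).
  assert (F4 : forall t, q t < (qsv ba bv c n) -> p t = ps -> exists s, t < s /\ p s > ps /\ q s = (qsv ba bv c n)).
  { intros t A B. destruct (cov4 _ _ _ _ _ _ _ _ h t C Hc A B) as [[s [? ?]] _]. exists s; split; [lra|auto]. }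
  assert (F3 : forall t, p t < ps -> q t = (qsv ba bv c n) -> exists s, t < s /\ p s > ps /\ q s = (qsv ba bv c n)).
  { intros t A B. destruct (cov3 _ _ _ _ _ _ _ _ h t C Hc A B) as [[s [? [? ?]]] _].
    destruct (F4 s) as [s' [? ?]]; auto. exists s'; split; [lra|auto]. }
  assert (F2 : forall t, q t > (qsv ba bv c n) -> p t = ps -> exists s, t < s /\ p s > ps /\ q s = (qsv ba bv c n)).
  { intros t A B. destruct (cov2 _ _ _ _ _ _ _ _ h t C Hc A B) as [[s [? [? ?]]] _].
    destruct (F3 s) as [s' [? ?]]; auto. exists s'; split; [lra|auto]. }
  assert (Start : exists s0, p s0 > ps /\ q s0 = (qsv ba bv c n)).
  { destruct (Rtotal_order (p 0) ps) as [h1|[h1|h1]]; destruct (Rtotal_order (q 0) (qsv ba bv c n)) as [h2|[h2|h2]].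
    - destruct (st3 _ _ _ _ _ _ _ _ C 0 ltac:(lra) ltac:(lra)) as (t1 & _ & E1 & E2 & _).
      destruct (F4 t1) as [s [_ ?]]; [lra|lra|]. eauto.
    - destruct (st3 _ _ _ _ _ _ _ _ C 0 ltac:(lra) ltac:(lra)) as (t1 & _ & E1 & E2 & _).
      destruct (F4 t1) as [s [_ ?]]; [lra|lra|]. eauto.
    - destruct (st2 _ _ _ _ _ _ _ _ C 0 ltac:(lra) ltac:(lra)) as (t1 & _ & E1 & E2 & _).
      destruct (F3 t1) as [s [_ ?]]; [lra|lra|]. eauto.
    - destruct (st4 _ _ _ _ _ _ _ _ C 0 ltac:(lra) ltac:(lra)) as (t1 & _ & E1 & E2 & _).
      exists t1; split; lra.
    - exfalso. apply Hne. rewrite h1, h2. reflexivity.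
    - destruct (st2 _ _ _ _ _ _ _ _ C 0 ltac:(lra) ltac:(lra)) as (t1 & _ & E1 & E2 & _).
      destruct (F3 t1) as [s [_ ?]]; [lra|lra|]. eauto.
    - destruct (st4 _ _ _ _ _ _ _ _ C 0 ltac:(lra) ltac:(lra)) as (t1 & _ & E1 & E2 & _).
      exists t1; split; lra.
    - destruct (st1 _ _ _ _ _ _ _ _ C 0 ltac:(lra) ltac:(lra)) as (t1 & _ & E1 & E2 & _).
      destruct (F2 t1) as [s [_ ?]]; [lra|lra|]. eauto.
    - destruct (st1 _ _ _ _ _ _ _ _ C 0 ltac:(lra) ltac:(lra)) as (t1 & _ & E1 & E2 & _).
      destruct (F2 t1) as [s [_ ?]]; [lra|lra|]. eauto. }
  destruct Start as [s0 [A0 B0]].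
  destruct (cov1 _ _ _ _ _ _ _ _ h s0 C Hc A0 B0) as [[s1 [T1 [A1 B1]]] Cv1].
  destruct (cov2 _ _ _ _ _ _ _ _ h s1 C Hc A1 B1) as [[s2 [T2 [A2 B2]]] Cv2].
  destruct (cov3 _ _ _ _ _ _ _ _ h s2 C Hc A2 B2) as [[s3 [T3 [A3 B3]]] Cv3].
  destruct (cov4 _ _ _ _ _ _ _ _ h s3 C Hc A3 B3) as [[s4 [T4 [A4 B4]]] Cv4].
  exists (s4 - s0). split; [lra|]. split.
  - assert (Eq : p s0 = p s4).
    { destruct (Hs s0) as ([? ?] & _). destruct (Hs s4) as ([? ?] & _).
      apply (R_inj_hi n ba bv c ps); auto; try lra.
      pose proof (Hc s0) as X. pose proof (Hc s4) as Y. unfold Hfun in *. rewrite B0 in X. rewrite B4 in Y. lra. }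
    assert (U : forall t, p (t + s0) = p (t + s4) /\ q (t + s0) = q (t + s4)).
    { intros t. apply (uniq_sol n ba bv c (fun t => p (t + s0)) (fun t => q (t + s0))
       (fun t => p (t + s4)) (fun t => q (t + s4)) H (shift_sol _ _ _ _ _ _ _ Hs) (shift_sol _ _ _ _ _ _ _ Hs)).
      - simpl. rewrite !Rplus_0_l. auto.
      - simpl. rewrite !Rplus_0_l. congruence. }
    intros t. specialize (U (t - s0)).
    replace (t - s0 + s0) with t in U by ring. replace (t - s0 + s4) with (t + (s4 - s0)) in U by ring.
    destruct U; split; congruence.
  - intros x y Hx Hy Hh. fold h in Hh.
    destruct (Rle_or_lt ps x); destruct (Rle_or_lt (qsv ba bv c n) y).
    + apply Cv1; auto.
    + apply Cv4; auto; lra.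
    + apply Cv2; auto; lra.
    + apply Cv3; auto; lra.
Qed.

Theorem mainTheorem5 :
  forall (n : nat) (ba bv c : R),
    (1 <= n)%nat -> 0 < ba -> 0 < bv -> 0 < c ->
    ba < (bv - c) * INR (n + 1) -> bv < c * INR (n + 1) ->
    exists ps qs : R,
      in01 ps /\ in01 qs /\
      qs = ba / ((bv - c) * INR (n + 1)) /\
      geo n ps = c * INR (n + 1) / bv /\
      (forall x, 0 < x -> geo n x = c * INR (n + 1) / bv -> x = ps) /\
      1 - bv / (c * INR (n + 1)) <= ps <= c * INR (n + 1) / bv - 1 /\
      fp ba bv c n ps qs = 0 /\ fq ba bv c n ps qs = 0 /\
      (forall p q : R -> R, is_solution ba bv c n p q ->
         forall t, Hfun ba bv c n (p t) (q t) = Hfun ba bv c n (p 0) (q 0)) /\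
      (forall x y, in01 x -> in01 y -> (x, y) <> (ps, qs) ->
         Hfun ba bv c n ps qs < Hfun ba bv c n x y) /\
      (forall M, exists d, 0 < d /\
         forall x y, in01 x -> in01 y ->
           (x < d \/ 1 - d < x \/ y < d \/ 1 - d < y) ->
           M < Hfun ba bv c n x y) /\
      (forall p q : R -> R, is_solution ba bv c n p q ->
         (p 0, q 0) <> (ps, qs) ->
         exists T, 0 < T /\
           (forall t, p (t + T) = p t /\ q (t + T) = q t) /\
           (forall x y, in01 x -> in01 y ->
              Hfun ba bv c n x y = Hfun ba bv c n (p 0) (q 0) ->
              exists t, p t = x /\ q t = y)).
Proof.
  intros n ba bv c Hn Ha Hb Hc H1 H2.
  assert (H : Hyp n ba bv c) by (repeat split; auto).
  destruct (ps_exists n ba bv c H) as [ps [Hp Hg]].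
  pose proof (qs_in _ _ _ _ H) as Hq.
  pose proof (INR_n1_pos n) as HN.
  exists ps, (qsv ba bv c n).
  split; [exact Hp|]. split; [exact Hq|]. split; [reflexivity|]. split; [exact Hg|].
  split.
  { intros x Hx Hgx. destruct (Rtotal_order x ps) as [h|[h|h]]; auto.
    - pose proof (geo_gap n x ps Hn ltac:(lra)). lra.
    - pose proof (geo_gap n ps x Hn ltac:(lra)). lra. }
  split.
  { split.
    - pose proof (geo_mul n ps) as E. rewrite Hg in E.
      assert (0 <= ps ^ S n) by (apply pow_le; lra).
      set (K := c * INR (n + 1) / bv) in *.
      assert (HK : 0 < K) by (unfold K; apply Rdiv_lt_0_compat; nra).
      replace (bv / (c * INR (n + 1))) with (/ K) by (unfold K; field; split; lra).
      assert ((1 - ps) * K <= 1) by lra.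
      assert (1 - ps <= / K).
      { apply (Rmult_le_reg_r K); auto. rewrite Rinv_l; lra. }
      lra.
    - pose proof (geo_gap n 0 ps Hn ltac:(lra)). rewrite geo_zero in H0. lra. }
  split. { rewrite fp_eq by auto. ring. }
  split. { rewrite fq_eq. rewrite (Bf_ps n ba bv c ps H Hg). ring. }
  split. { intros p q Hs t. apply H_conserved; auto. }
  split.
  { intros x y Hx Hy Hne. unfold in01 in *. unfold Hfun.
    destruct (R_min n ba bv c ps x H Hp Hg Hx) as [R1 R2].
    destruct (S_max n ba bv c y H Hy) as [S1 S2].
    destruct (Req_dec x ps) as [->|hx].
    - assert (y <> qsv ba bv c n) by (intros ->; apply Hne; reflexivity).
      specialize (S2 H0). lra.
    - specialize (R2 hx). lra. }
  split. { apply blowup; auto. }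
  intros p q Hs Hne. apply (orbit n ba bv c ps p q H Hp Hg Hs Hne).
Qed.
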